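(* Let $\mathcal{Q}^2$ be the set of all quadrilaterals $[I,J] := \mathrm{conv}\{-a e_1, b e_1, -c e_2, d e_2\}$ with $a,b,c,d>0$. Assume that $\mu \colon \mathcal{Q}^2 \to \mathbb{R}^2$ is a valuation which is $\mathrm{VL}(2)$-covariant, i.e. $\mu(\phi P) = \phi\,\mu(P)$ whenever $\phi \in \mathrm{VL}(2)$ and $P, \phi P \in \mathcal{Q}^2$. Define $F(r) := \frac12 \mu_1(\mathrm{conv}\{-e_1, r e_1, -e_2, e_2\})$ for $r \in (0,\infty)$, where $\mu_1,\mu_2$ denote the components of $\mu$. Then for all $a,b,c,d>0$, \[ \mu[I,J] = \begin{pmatrix} -\frac1c & \frac1c & -\frac1d & \frac1d \\ -\frac1a & -\frac1b & \frac1a & \frac1b \end{pmatrix} \begin{pmatrix} F(ac)\\ F(bc) \\ F(ad) \\ F(bd)\end{pmatrix}. \] In particular, $\mu[I,J] = \tilde\mu(\mathrm{conv}\{-ae_1, be_1, -ce_2\}) + \tilde\mu(\mathrm{conv}\{-ae_1,be_1,de_2\})$, where for all $a,b,c,d>0$ \[ \tilde\mu(\mathrm{conv}\{-ae_1, be_1, -ce_2\}) := \begin{pmatrix} \frac1c(F(bc)-F(ac)) \\ -\frac1a F(ac) - \frac1b F(bc)\end{pmatrix}, \qquad \tilde\mu(\mathrm{conv}\{-ae_1, be_1, de_2\}) := \begin{pmatrix} \frac1d(F(bd)-F(ad)) \\ \frac1a F(ad) + \frac1b F(bd)\end{pmatrix}. \]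
   Context: $e_1,e_2$ is the standard basis of $\mathbb{R}^2$. $\mathrm{VL}(2)$ is the group of linear maps of $\mathbb{R}^2$ with determinant $1$ or $-1$. A map $\mu$ on a family $\mathcal{S}$ of sets is a valuation if $\mu(K \cup L) + \mu(K \cap L) = \mu(K) + \mu(L)$ whenever $K, L, K\cup L, K \cap L \in \mathcal{S}$. *)

(* Defs.v *)
From HB Require Import structures.
From mathcomp Require Import all_boot all_order all_algebra.
From mathcomp Require Import boolp classical_sets reals.
Set Implicit Arguments. Unset Strict Implicit. Unset Printing Implicit Defensive.
Import Order.TTheory GRing.Theory Num.Theory.
Local Open Scope ring_scope.
Local Open Scope classical_set_scope.

Section Defs.
Variable R : realType.

Definition vec2 (x y : R) : 'cV[R]_2 := \col_(i < 2) (if i == ord0 then x else y).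
Definition e1 : 'cV[R]_2 := vec2 1 0.
Definition e2 : 'cV[R]_2 := vec2 0 1.

Definition conv (s : seq 'cV[R]_2) : set 'cV[R]_2 :=
  [set x | exists w : 'I_(size s) -> R,
     (forall i, 0 <= w i) /\ \sum_i w i = 1 /\ x = \sum_i w i *: s`_i].

Definition quad (a b c d : R) : set 'cV[R]_2 :=
  conv [:: - (a *: e1); b *: e1; - (c *: e2); d *: e2].

Definition Q2 (P : set 'cV[R]_2) : Prop :=
  exists a b c d : R, [/\ 0 < a, 0 < b, 0 < c & 0 < d] /\ P = quad a b c d.

Definition is_valuation_Q2 (mu : set 'cV[R]_2 -> 'cV[R]_2) : Prop :=
  forall K L, Q2 K -> Q2 L -> Q2 (K `|` L) -> Q2 (K `&` L) ->
    mu (K `|` L) + mu (K `&` L) = mu K + mu L.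

Definition VL2 (A : 'M[R]_2) : Prop := \det A = 1 \/ \det A = -1.

Definition lin_image (A : 'M[R]_2) (P : set 'cV[R]_2) : set 'cV[R]_2 :=
  (fun x => A *m x) @` P.

Definition VL2_covariant_Q2 (mu : set 'cV[R]_2 -> 'cV[R]_2) : Prop :=
  forall A P, VL2 A -> Q2 P -> Q2 (lin_image A P) ->
    mu (lin_image A P) = A *m mu P.

Definition comp1 (v : 'cV[R]_2) : R := v ord0 ord0.
Definition comp2 (v : 'cV[R]_2) : R := v (lift ord0 ord0) ord0.

Definition Ffun (mu : set 'cV[R]_2 -> 'cV[R]_2) (r : R) : R :=
  2^-1 * comp1 (mu (conv [:: - e1; r *: e1; - e2; e2])).

Definition coef_mx (a b c d : R) : 'M[R]_(2, 4) :=
  \matrix_(i < 2, j < 4)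
    (nth [::] [:: [:: - c^-1; c^-1; - d^-1; d^-1];
                  [:: - a^-1; - b^-1; a^-1; b^-1]] i)`_j.

Definition Fvec (mu : set 'cV[R]_2 -> 'cV[R]_2) (a b c d : R) : 'cV[R]_4 :=
  let F := Ffun mu in
  \col_(j < 4) [:: F (a * c); F (b * c); F (a * d); F (b * d)]`_j.

(* tilde mu on the lower triangle conv{-a e1, b e1, -c e2} *)
Definition mutilde_low (mu : set 'cV[R]_2 -> 'cV[R]_2) (a b c : R) : 'cV[R]_2 :=
  let F := Ffun mu in
  vec2 (c^-1 * (F (b * c) - F (a * c))) (- a^-1 * F (a * c) - b^-1 * F (b * c)).

(* tilde mu on the upper triangle conv{-a e1, b e1, d e2} *)
Definition mutilde_up (mu : set 'cV[R]_2 -> 'cV[R]_2) (a b d : R) : 'cV[R]_2 :=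
  let F := Ffun mu in
  vec2 (d^-1 * (F (b * d) - F (a * d))) (a^-1 * F (a * d) + b^-1 * F (b * d)).

End Defs.

(* Main.v *)
Require Import Defs.
From mathcomp Require Import all_boot all_order all_algebra.
From mathcomp Require Import boolp classical_sets reals.
From mathcomp Require Import ring lra.
Import Order.TTheory GRing.Theory Num.Theory.
Local Open Scope ring_scope.
Local Open Scope classical_set_scope.

Section H.
Variable R : realType.
Implicit Types (a b c d x y : R).

Definition mx2 (p q r s : R) : 'M[R]_2 :=
  \matrix_(i < 2, j < 2) (if i == ord0 then (if j == ord0 then p else q)
                          else (if j == ord0 then r else s)).

Lemma det_mx2 p q r s : \det (mx2 p q r s) = p * s - q * r.
Proof.
rewrite (expand_det_row _ ord0) !big_ord_recl big_ord0 /cofactor !det_mx11 !mxE /=.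
rewrite !expr0 /=. ring.
Qed.

Lemma mulmx_vec2 p q r s x y :
  mx2 p q r s *m vec2 x y = vec2 (p * x + q * y) (r * x + s * y).
Proof.
apply/matrixP => i j; rewrite !mxE !big_ord_recl big_ord0 !mxE /=.
by case: (i == ord0); rewrite addr0.
Qed.

Lemma vec2D x y x' y' : vec2 x y + vec2 x' y' = vec2 (x + x') (y + y').
Proof. by apply/matrixP => i j; rewrite !mxE; case: (i == ord0). Qed.
Lemma vec2Z k x y : k *: vec2 x y = vec2 (k * x) (k * y).
Proof. by apply/matrixP => i j; rewrite !mxE; case: (i == ord0). Qed.
Lemma vec2N x y : - vec2 x y = vec2 (- x) (- y).
Proof. by apply/matrixP => i j; rewrite !mxE; case: (i == ord0). Qed.
Lemma comp1_vec2 x y : comp1 (vec2 x y) = x.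
Proof. by rewrite /comp1 mxE. Qed.
Lemma comp2_vec2 x y : comp2 (vec2 x y) = y.
Proof. by rewrite /comp2 mxE. Qed.
Lemma vec2_eta (v : 'cV[R]_2) : v = vec2 (comp1 v) (comp2 v).
Proof.
apply/matrixP => i j; rewrite !mxE (ord1 j) /comp1 /comp2.
case: i => -[|[|//]] Hi /=; congr (v _ _); exact: val_inj.
Qed.

Definition qv a b c d (w0 w1 w2 w3 : R) : 'cV[R]_2 :=
  vec2 (w1 * b - w0 * a) (w3 * d - w2 * c).
Definition wok (w0 w1 w2 w3 : R) :=
  [/\ 0 <= w0, 0 <= w1, 0 <= w2, 0 <= w3 & w0 + w1 + w2 + w3 = 1].

Lemma quadE a b c d : quad a b c d =
  [set x | exists w0 w1 w2 w3, wok w0 w1 w2 w3 /\ x = qv a b c d w0 w1 w2 w3].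
Proof.
have E : forall w0 w1 w2 w3,
  w0 *: - (a *: e1 R) + w1 *: (b *: e1 R) + w2 *: - (c *: e2 R) + w3 *: (d *: e2 R)
  = qv a b c d w0 w1 w2 w3.
  move=> w0 w1 w2 w3; rewrite /e1 /e2 /qv !vec2Z !vec2N !vec2Z !vec2D.
  congr vec2; ring.
rewrite /quad /conv; apply/seteqP; split => x /=.
- move=> [w [w0 [ws ->]]].
  move: ws; rewrite !big_ord_recl !big_ord0 /= => ws.
  exists (w ord0), (w (lift ord0 ord0)), (w (lift ord0 (lift ord0 ord0))),
    (w (lift ord0 (lift ord0 (lift ord0 ord0)))).
  split; last by rewrite -E !addr0 !addrA.
  by split => //; rewrite -ws !addr0 !addrA.
- move=> [w0 [w1 [w2 [w3 [[h0 h1 h2 h3 hs] ->]]]]].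
  exists (fun i : 'I_4 => [:: w0; w1; w2; w3]`_i).
  split; first by case => -[|[|[|[|//]]]] /=.
  rewrite !big_ord_recl !big_ord0 /= -E !addr0 !addrA; split => //.
Qed.
Lemma quad_mem a b c d p q (al be ga de : R) :
  0 < a -> 0 < b -> 0 < c -> 0 < d ->
  0 <= al -> 0 <= be -> 0 <= ga -> 0 <= de -> al + be + ga + de <= 1 ->
  p = al * b - be * a -> q = de * d - ga * c -> quad a b c d (vec2 p q).
Proof.
move=> a0 b0 c0 d0 h1 h2 h3 h4 hs -> ->; rewrite quadE /=.
set t := 1 - (al + be + ga + de).
have ab0 : 0 < a + b by rewrite addr_gt0.
have t0 : 0 <= t by rewrite /t subr_ge0.
exists (be + t * b / (a + b)), (al + t * a / (a + b)), ga, de; split.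
  split.
  - by rewrite addr_ge0 // divr_ge0 ?mulr_ge0 // ltW.
  - by rewrite addr_ge0 // divr_ge0 ?mulr_ge0 // ltW.
  - done.
  - done.
  - rewrite /t; field; by rewrite gt_eqF.
rewrite /qv; congr vec2; field; by rewrite gt_eqF.
Qed.

Definition qin a b c d (p q : R) : Prop :=
  [/\ p * b^-1 + q * d^-1 <= 1, p * b^-1 - q * c^-1 <= 1,
      - (p * a^-1) + q * d^-1 <= 1 & - (p * a^-1) - q * c^-1 <= 1].

Lemma quad_ineq a b c d (x : 'cV[R]_2) :
  0 < a -> 0 < b -> 0 < c -> 0 < d ->
  quad a b c d x <-> qin a b c d (comp1 x) (comp2 x).
Proof.
move=> a0 b0 c0 d0; split.
  rewrite quadE => -[w0 [w1 [w2 [w3 [[h0 h1 h2 h3 hs] ->]]]]].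
  rewrite /qv comp1_vec2 comp2_vec2.
  have E1 : (w1 * b - w0 * a) * b^-1 = w1 - w0 * (a * b^-1).
    field; by rewrite gt_eqF.
  have E2 : (w1 * b - w0 * a) * a^-1 = w1 * (b * a^-1) - w0.
    field; by rewrite gt_eqF.
  have E3 : (w3 * d - w2 * c) * d^-1 = w3 - w2 * (c * d^-1).
    field; by rewrite gt_eqF.
  have E4 : (w3 * d - w2 * c) * c^-1 = w3 * (d * c^-1) - w2.
    field; by rewrite gt_eqF.
  have F1 : 0 <= w0 * (a * b^-1) by rewrite mulr_ge0 // ltW // divr_gt0.
  have F2 : 0 <= w1 * (b * a^-1) by rewrite mulr_ge0 // ltW // divr_gt0.
  have F3 : 0 <= w2 * (c * d^-1) by rewrite mulr_ge0 // ltW // divr_gt0.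
  have F4 : 0 <= w3 * (d * c^-1) by rewrite mulr_ge0 // ltW // divr_gt0.
  rewrite /qin E1 E2 E3 E4; split; lra.
rewrite [in quad _ _ _ _ x](vec2_eta x).
move: (comp1 x) (comp2 x) => p q [i1 i2 i3 i4].
have Ia := invr_gt0 a; have Ib := invr_gt0 b.
have Ic := invr_gt0 c; have Id := invr_gt0 d.
have pb : forall y, 0 < y -> p = p * y^-1 * y - 0 * a.
  by move=> y y0; rewrite mul0r subr0 mulfVK // gt_eqF.
have pa : forall y, 0 < y -> p = 0 * b - (- (p * y^-1)) * y.
  by move=> y y0; rewrite mul0r sub0r mulNr opprK mulfVK // gt_eqF.
have qd : forall y, 0 < y -> q = q * y^-1 * y - 0 * c.
  by move=> y y0; rewrite mul0r subr0 mulfVK // gt_eqF.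
have qc : forall y, 0 < y -> q = 0 * d - (- (q * y^-1)) * y.
  by move=> y y0; rewrite mul0r sub0r mulNr opprK mulfVK // gt_eqF.
have [p0|p0] := lerP 0 p; have [q0|q0] := lerP 0 q.
- apply: (@quad_mem a b c d p q (p * b^-1) (0) (0) (q*d^-1)) => //;
    try (by apply: qd); try (by apply: pb); try lra.
  + by rewrite mulr_ge0 // ltW // invr_gt0.
  + by rewrite mulr_ge0 // ltW // invr_gt0.
- apply: (@quad_mem a b c d p q (p * b^-1) (0) (- (q * c^-1)) (0)) => //;
    try (by apply: qc); try (by apply: pb); try lra.
  + by rewrite mulr_ge0 // ltW // invr_gt0.
  + by rewrite oppr_ge0 mulr_le0_ge0 // ?ltW // invr_gt0.
- apply: (@quad_mem a b c d p q (0) (- (p * a^-1)) (0) (q*d^-1)) => //;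
    try (by apply: qd); try (by apply: pa); try lra.
  + by rewrite oppr_ge0 mulr_le0_ge0 // ?ltW // invr_gt0.
  + by rewrite mulr_ge0 // ltW // invr_gt0.
- apply: (@quad_mem a b c d p q (0) (- (p * a^-1)) (- (q * c^-1)) (0)) => //;
    try (by apply: qc); try (by apply: pa); try lra.
  + by rewrite oppr_ge0 mulr_le0_ge0 // ?ltW // invr_gt0.
  + by rewrite oppr_ge0 mulr_le0_ge0 // ?ltW // invr_gt0.
Qed.
Lemma sign_facts (p A A' B B' : R) : 0 < A -> A <= A' -> 0 < B' -> B' <= B ->
  (0 <= p * B' /\ p * B' <= p * B /\ 0 <= p * A /\ p * A <= p * A') \/
  (p * B <= p * B' /\ p * B' <= 0 /\ p * A' <= p * A /\ p * A <= 0).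
Proof.
move=> A0 AA B0 BB; have [p0|p0] := lerP 0 p.
  left; split; first by rewrite mulr_ge0 // ltW.
  split; first by rewrite ler_wpM2l.
  split; first by rewrite mulr_ge0 // ltW.
  by rewrite ler_wpM2l.
right; split; first by rewrite ler_wnM2l // ltW.
split; first by rewrite mulr_le0_ge0 // ltW.
split; first by rewrite ler_wnM2l // ltW.
by rewrite mulr_le0_ge0 // ltW.
Qed.

Lemma quad_union a a' b b' c d :
  0 < a' -> a' <= a -> 0 < b -> b <= b' -> 0 < c -> 0 < d ->
  quad a b c d `|` quad a' b' c d = quad a b' c d.
Proof.
move=> a0 aa b0 bb c0 d0.
have a0' : 0 < a by apply: lt_le_trans aa.
have b0' : 0 < b' by apply: lt_le_trans bb.
apply/seteqP; split => x /=.
  rewrite !quad_ineq //.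
  move: (comp1 x) (comp2 x) => p q.
  have := @sign_facts p a^-1 a'^-1 b^-1 b'^-1.
  rewrite !invr_gt0 a0' b0' => /(_ isT _ isT _).
  rewrite lef_pV2 ?posrE // lef_pV2 ?posrE // => /(_ aa bb) H.
  case: H => [[?[?[??]]]|[?[?[??]]]];
  by rewrite /qin; case=> -[????]; split; lra.
rewrite !quad_ineq //.
move: (comp1 x) (comp2 x) => p q.
have := @sign_facts p a^-1 a'^-1 b^-1 b'^-1.
rewrite !invr_gt0 a0' b0' => /(_ isT _ isT _).
rewrite lef_pV2 ?posrE // lef_pV2 ?posrE // => /(_ aa bb) H.
rewrite /qin => -[h1 h2 h3 h4].
case: H => [[?[?[??]]]|[?[?[??]]]]; [right|left]; split; lra.
Qed.
Lemma quad_inter a a' b b' c d :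
  0 < a' -> a' <= a -> 0 < b -> b <= b' -> 0 < c -> 0 < d ->
  quad a b c d `&` quad a' b' c d = quad a' b c d.
Proof.
move=> a0 aa b0 bb c0 d0.
have a0' : 0 < a by apply: lt_le_trans aa.
have b0' : 0 < b' by apply: lt_le_trans bb.
apply/seteqP; split => x /=.
  rewrite !quad_ineq //.
  move: (comp1 x) (comp2 x) => p q.
  have := @sign_facts p a^-1 a'^-1 b^-1 b'^-1.
  rewrite !invr_gt0 a0' b0' => /(_ isT _ isT _).
  rewrite lef_pV2 ?posrE // lef_pV2 ?posrE // => /(_ aa bb) H.
  case: H => [[?[?[??]]]|[?[?[??]]]];
  by rewrite /qin; case=> -[????] -[????]; split; lra.
rewrite !quad_ineq //.
move: (comp1 x) (comp2 x) => p q.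
have := @sign_facts p a^-1 a'^-1 b^-1 b'^-1.
rewrite !invr_gt0 a0' b0' => /(_ isT _ isT _).
rewrite lef_pV2 ?posrE // lef_pV2 ?posrE // => /(_ aa bb) H.
rewrite /qin => -[h1 h2 h3 h4].
case: H => [[?[?[??]]]|[?[?[??]]]]; split; split; lra.
Qed.

Arguments quad_union {a a' b b' c d}.
Arguments quad_inter {a a' b b' c d}.
Lemma Q2_quad a b c d : 0 < a -> 0 < b -> 0 < c -> 0 < d -> Q2 (quad a b c d).
Proof. by move=> *; exists a, b, c, d. Qed.

Lemma val_core (mu : set 'cV[R]_2 -> 'cV[R]_2) a a' b b' c d :
  is_valuation_Q2 mu ->
  0 < a' -> a' <= a -> 0 < b -> b <= b' -> 0 < c -> 0 < d ->
  mu (quad a b' c d) + mu (quad a' b c d) = mu (quad a b c d) + mu (quad a' b' c d).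
Proof.
move=> V a0 aa b0 bb c0 d0.
have a0' : 0 < a by apply: lt_le_trans aa.
have b0' : 0 < b' by apply: lt_le_trans bb.
rewrite -(quad_union a0 aa b0 bb c0 d0) -(quad_inter a0 aa b0 bb c0 d0).
apply: V; first exact: Q2_quad.
- exact: Q2_quad.
- rewrite (quad_union a0 aa b0 bb c0 d0); exact: Q2_quad.
- rewrite (quad_inter a0 aa b0 bb c0 d0); exact: Q2_quad.
Qed.

Arguments val_core {mu a a' b b' c d}.
Lemma val_gen (mu : set 'cV[R]_2 -> 'cV[R]_2) x y x' y' c d :
  is_valuation_Q2 mu ->
  0 < x -> 0 < y -> 0 < x' -> 0 < y' -> 0 < c -> 0 < d ->
  mu (quad x y c d) + mu (quad x' y' c d) = mu (quad x y' c d) + mu (quad x' y c d).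
Proof.
move=> V x0 y0 x0' y0' c0 d0.
have [xx|xx] := lerP x' x; have [yy|yy] := lerP y y'.
- by rewrite (val_core V x0' xx y0 yy c0 d0).
- by rewrite (val_core V x0' xx y0' (ltW yy) c0 d0) addrC.
- by rewrite addrC (val_core V x0 (ltW xx) y0 yy c0 d0) addrC.
- by rewrite [RHS]addrC (val_core V x0 (ltW xx) y0' (ltW yy) c0 d0) addrC.
Qed.

Lemma limX a b c d :  lin_image (mx2 (-1) 0 0 1) (quad a b c d) = quad b a c d.
Proof.
rewrite /lin_image !quadE; apply/seteqP; split => y /=.
  move=> [x [w0 [w1 [w2 [w3 [[h0 h1 h2 h3 hs] ->]]]]] <-].
  exists w1, w0, w2, w3; split; first by split => //; lra.
  rewrite /qv mulmx_vec2; congr vec2; (field; rewrite ?gt_eqF //).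
move=> [w0 [w1 [w2 [w3 [[h0 h1 h2 h3 hs] ->]]]]].
exists (qv a b c d w1 w0 w2 w3); first by exists w1, w0, w2, w3; split => //; split => //; lra.
rewrite /qv mulmx_vec2; congr vec2; (field; rewrite ?gt_eqF //).
Qed.

Lemma limY a b c d :  lin_image (mx2 1 0 0 (-1)) (quad a b c d) = quad a b d c.
Proof.
rewrite /lin_image !quadE; apply/seteqP; split => y /=.
  move=> [x [w0 [w1 [w2 [w3 [[h0 h1 h2 h3 hs] ->]]]]] <-].
  exists w0, w1, w3, w2; split; first by split => //; lra.
  rewrite /qv mulmx_vec2; congr vec2; (field; rewrite ?gt_eqF //).
move=> [w0 [w1 [w2 [w3 [[h0 h1 h2 h3 hs] ->]]]]].
exists (qv a b c d w0 w1 w3 w2); first by exists w0, w1, w3, w2; split => //; split => //; lra.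
rewrite /qv mulmx_vec2; congr vec2; (field; rewrite ?gt_eqF //).
Qed.

Lemma limW a b c d :  lin_image (mx2 0 1 1 0) (quad a b c d) = quad c d a b.
Proof.
rewrite /lin_image !quadE; apply/seteqP; split => y /=.
  move=> [x [w0 [w1 [w2 [w3 [[h0 h1 h2 h3 hs] ->]]]]] <-].
  exists w2, w3, w0, w1; split; first by split => //; lra.
  rewrite /qv mulmx_vec2; congr vec2; (field; rewrite ?gt_eqF //).
move=> [w0 [w1 [w2 [w3 [[h0 h1 h2 h3 hs] ->]]]]].
exists (qv a b c d w2 w3 w0 w1); first by exists w2, w3, w0, w1; split => //; split => //; lra.
rewrite /qv mulmx_vec2; congr vec2; (field; rewrite ?gt_eqF //).
Qed.

Lemma limS s a b c d : 0 < s -> lin_image (mx2 s 0 0 s^-1) (quad a b c d) = quad (s * a) (s * b) (c / s) (d / s).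
Proof.
move=> s0.
rewrite /lin_image !quadE; apply/seteqP; split => y /=.
  move=> [x [w0 [w1 [w2 [w3 [[h0 h1 h2 h3 hs] ->]]]]] <-].
  exists w0, w1, w2, w3; split; first by split => //; lra.
  rewrite /qv mulmx_vec2; congr vec2; (field; rewrite ?gt_eqF //).
move=> [w0 [w1 [w2 [w3 [[h0 h1 h2 h3 hs] ->]]]]].
exists (qv a b c d w0 w1 w2 w3); first by exists w0, w1, w2, w3; split => //; split => //; lra.
rewrite /qv mulmx_vec2; congr vec2; (field; rewrite ?gt_eqF //).
Qed.

Section M.
Variable mu : set 'cV[R]_2 -> 'cV[R]_2.
Hypothesis V : is_valuation_Q2 mu.
Hypothesis Cov : VL2_covariant_Q2 mu.

Let g1 (a b c d : R) := comp1 (mu (quad a b c d)).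
Let g2 (a b c d : R) := comp2 (mu (quad a b c d)).

Lemma comp1D (u v : 'cV[R]_2) : comp1 (u + v) = comp1 u + comp1 v.
Proof. by rewrite /comp1 mxE. Qed.
Lemma comp2D (u v : 'cV[R]_2) : comp2 (u + v) = comp2 u + comp2 v.
Proof. by rewrite /comp2 mxE. Qed.

Lemma cov_gen (M : 'M[R]_2) a b c d a' b' c' d' :
  VL2 M -> 0 < a -> 0 < b -> 0 < c -> 0 < d ->
  0 < a' -> 0 < b' -> 0 < c' -> 0 < d' ->
  lin_image M (quad a b c d) = quad a' b' c' d' ->
  mu (quad a' b' c' d') = M *m mu (quad a b c d).
Proof.
move=> VM a0 b0 c0 d0 a0' b0' c0' d0' E.
rewrite -E; apply: Cov => //; first exact: Q2_quad.
rewrite E; exact: Q2_quad.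
Qed.

Lemma covX a b c d : 0 < a -> 0 < b -> 0 < c -> 0 < d ->
  g1 b a c d = - g1 a b c d.
Proof.
move=> a0 b0 c0 d0.
rewrite /g1 (@cov_gen (mx2 (-1) 0 0 1) a b c d) ?limX //; last first.
  by rewrite /VL2 det_mx2; right; ring.
rewrite [in mu (quad a b c d)](vec2_eta (mu (quad a b c d))) mulmx_vec2.
rewrite !comp1_vec2; ring.
Qed.

Lemma covY a b c d : 0 < a -> 0 < b -> 0 < c -> 0 < d ->
  g1 a b d c = g1 a b c d.
Proof.
move=> a0 b0 c0 d0.
rewrite /g1 (@cov_gen (mx2 1 0 0 (-1)) a b c d) ?limY //; last first.
  by rewrite /VL2 det_mx2; right; ring.
rewrite [in mu (quad a b c d)](vec2_eta (mu (quad a b c d))) mulmx_vec2.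
rewrite !comp1_vec2; ring.
Qed.

Lemma covW a b c d : 0 < a -> 0 < b -> 0 < c -> 0 < d ->
  g1 c d a b = g2 a b c d.
Proof.
move=> a0 b0 c0 d0.
rewrite /g1 (@cov_gen (mx2 0 1 1 0) a b c d) ?limW //; last first.
  by rewrite /VL2 det_mx2; right; ring.
rewrite [in mu (quad a b c d)](vec2_eta (mu (quad a b c d))) mulmx_vec2.
rewrite !comp1_vec2 /g2; ring.
Qed.

Lemma covS s a b c d : 0 < s -> 0 < a -> 0 < b -> 0 < c -> 0 < d ->
  g1 (s * a) (s * b) (c / s) (d / s) = s * g1 a b c d.
Proof.
move=> s0 a0 b0 c0 d0.
have VM : VL2 (mx2 s 0 0 s^-1).
  by rewrite /VL2 det_mx2; left; rewrite mulr0 subr0 mulfV // gt_eqF.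
rewrite /g1 (@cov_gen (mx2 s 0 0 s^-1) a b c d) ?limS ?mulr_gt0 ?divr_gt0 ?invr_gt0 //.
rewrite [in mu (quad a b c d)](vec2_eta (mu (quad a b c d))) mulmx_vec2.
rewrite !comp1_vec2; ring.
Qed.

Lemma V1 x y x' y' u v : 0 < x -> 0 < y -> 0 < x' -> 0 < y' -> 0 < u -> 0 < v ->
  g1 x y u v + g1 x' y' u v = g1 x y' u v + g1 x' y u v.
Proof.
move=> *; rewrite /g1 -!comp1D; congr comp1; exact: val_gen.
Qed.

Lemma V2 a b x y x' y' : 0 < a -> 0 < b -> 0 < x -> 0 < y -> 0 < x' -> 0 < y' ->
  g1 a b x y + g1 a b x' y' = g1 a b x y' + g1 a b x' y.
Proof.
move=> *; rewrite !covW // /g2 -!comp2D; congr comp2; exact: val_gen.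
Qed.


Arguments covX {a b c d}. Arguments covY {a b c d}. Arguments covW {a b c d}.
Arguments covS {s a b c d}. Arguments V1 {x y x' y' u v}. Arguments V2 {a b x y x' y'}.
Let F (r : R) := 2^-1 * g1 1 r 1 1.

Lemma g1_diag x u v : 0 < x -> 0 < u -> 0 < v -> g1 x x u v = 0.
Proof. move=> x0 u0 v0; have := covX x0 x0 u0 v0; lra. Qed.

Arguments g1_diag {x u v}.
Lemma Kform y s : 0 < y -> 0 < s -> g1 1 y s 1 = F y + (F (y * s) - F s) / s.
Proof.
move=> y0 s0.
have o : (0 : R) < 1 by [].
have e1 := covS s0 o y0 s0 s0; rewrite mulr1 divff ?gt_eqF // in e1.
have e2 := V2 o y0 s0 s0 o o.
have e2' := covY o y0 s0 o.
have e3 := V1 s0 (mulr_gt0 s0 y0) o o o o.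
have e3' := covX o s0 o o.
have e4 := g1_diag o o o.
have eA : g1 1 y s s = (g1 1 (s * y) 1 1 - g1 1 s 1 1) / s.
  apply: (mulfI (negbT (gt_eqF s0))); rewrite -e1 [RHS]mulrC divfK ?gt_eqF //; lra.
have eK : g1 1 y s 1 = 2^-1 * (g1 1 y s s + g1 1 y 1 1).
  move: e2; rewrite e2' => ->; field; rewrite ?pnatr_eq0 //.
rewrite eK eA /F (mulrC y s); field; rewrite ?pnatr_eq0 ?gt_eqF //.
Qed.

Arguments Kform {y s}.
Lemma main1 a b c d : 0 < a -> 0 < b -> 0 < c -> 0 < d ->
  g1 a b c d = (F (b * c) - F (a * c)) / c + (F (b * d) - F (a * d)) / d.
Proof.
move=> a0 b0 c0 d0.
have o : (0 : R) < 1 by [].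
have HH u : 0 < u -> g1 a b u 1 = g1 1 b u 1 - g1 1 a u 1.
  move=> u0; have := V1 a0 b0 o o u0 o; have := covX o a0 u0 o.
  have := g1_diag o u0 o; lra.
have s6 := V2 a0 b0 c0 d0 o o.
have s6' := covY a0 b0 d0 o.
have -> : g1 a b c d = g1 a b c 1 + g1 a b d 1 - g1 a b 1 1 by lra.
rewrite (HH c) // (HH d) // (HH 1) // (Kform b0 c0) (Kform a0 c0) (Kform b0 d0).
rewrite (Kform a0 d0) (Kform b0 o) (Kform a0 o) !mulr1.
field; by rewrite !gt_eqF.
Qed.

Lemma FfunE r : Ffun mu r = F r.
Proof. by rewrite /Ffun /F /g1 /quad !scale1r. Qed.

Lemma main_all a b c d : 0 < a -> 0 < b -> 0 < c -> 0 < d ->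
  mu (quad a b c d) = vec2
    ((F (b * c) - F (a * c)) / c + (F (b * d) - F (a * d)) / d)
    ((F (a * d) - F (a * c)) / a + (F (b * d) - F (b * c)) / b).
Proof.
move=> a0 b0 c0 d0.
rewrite [LHS]vec2_eta -/(g1 a b c d) -/(g2 a b c d) -covW // !main1 //.
by rewrite ![_ * a]mulrC ![_ * b]mulrC.
Qed.
End M.
End H.

Theorem lemma3p3 (R : realType) (mu : set 'cV[R]_2 -> 'cV[R]_2) :
  is_valuation_Q2 mu -> VL2_covariant_Q2 mu ->
  forall a b c d : R, 0 < a -> 0 < b -> 0 < c -> 0 < d ->
    mu (quad a b c d) = coef_mx a b c d *m Fvec mu a b c d /\
    mu (quad a b c d) = mutilde_low mu a b c + mutilde_up mu a b d.
Proof.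
move=> V Cov a b c d a0 b0 c0 d0.
rewrite (@main_all R mu V Cov a b c d a0 b0 c0 d0) /mutilde_low /mutilde_up /Fvec !FfunE.
split.
  apply/matrixP => i j; rewrite !mxE !big_ord_recl big_ord0 !mxE /=.
  case: i => -[|[|//]] Hi /=.
    ring.
  ring.
rewrite vec2D; congr vec2.
  ring.
ring.
Qed.
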